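(* Let $d\ge 2$ and $E,F\subset\mathbb F_q^d$. Then $$\sum_{t\in\mathbb F_q}\nu^2(t)\leq q^{-1}|E|^2|F|^2+q^{2d}|F|\,\mathfrak M(E),$$ and $$\sum_{t\in\mathbb F_q}\nu^2(t)\leq q^{-1}|E|^2|F|^2+q^{3d}\Big|\sum_{m\in S_0}\overline{\widehat E(m)}\widehat F(m)\Big|^2+q^{2d}|F|\,\mathfrak M^*(E).$$
   Context: $\mathbb F_q$ is a finite field of characteristic greater than two, $\mathbb F_q^*=\mathbb F_q\setminus\{0\}$, and $\chi$ is a fixed nontrivial additive character of $\mathbb F_q$. For $f:\mathbb F_q^d\to\mathbb C$, $\widehat f(m)=q^{-d}\sum_{x\in\mathbb F_q^d}\chi(-m\cdot x)f(x)$; sets are identified with their indicator functions. For $m\in\mathbb F_q^d$, $\|m\|=m_1^2+\dots+m_d^2$; $S_r=\{x\in\mathbb F_q^d:\|x\|=r\}$. $\nu(t)=|\{(x,y)\in E\times F:\|x-y\|=t\}|$. $\mathfrak M(E)=\max_{r\in\mathbb F_q}\sum_{m\in S_r}|\widehat E(m)|^2$ and $\mathfrak M^*(E)=\max_{r\in\mathbb F_q^*}\sum_{m\in S_r}|\widehat E(m)|^2$. *)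

(* Defs.v *)
From HB Require Import structures.
From mathcomp Require Import all_boot all_order all_algebra all_field.
Set Implicit Arguments. Unset Strict Implicit. Unset Printing Implicit Defensive.
Import Order.TTheory GRing.Theory Num.Theory.
Local Open Scope ring_scope.

Section Defs.
Variables (K : finFieldType) (d : nat).

Definition dotv (m x : 'rV[K]_d) : K := \sum_i m 0 i * x 0 i.
Definition normv (m : 'rV[K]_d) : K := \sum_i m 0 i ^+ 2.

Definition is_add_char (chi : K -> algC) : Prop :=
  (forall x y, chi (x + y) = chi x * chi y) /\ (forall x, `|chi x| = 1).
Definition nontrivial_char (chi : K -> algC) : Prop := exists x, chi x != 1.

Definition q : nat := #|K|.

Definition ind (E : {set 'rV[K]_d}) (x : 'rV[K]_d) : algC := (x \in E)%:R.

Definition fhat (chi : K -> algC) (f : 'rV[K]_d -> algC) (m : 'rV[K]_d) : algC :=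
  (q%:R ^+ d)^-1 * \sum_x chi (- dotv m x) * f x.

Definition nu (E F : {set 'rV[K]_d}) (t : K) : nat :=
  #|[set p : 'rV[K]_d * 'rV[K]_d | (p.1 \in E) && (p.2 \in F) && (normv (p.1 - p.2) == t)]|.

Definition sphere_mass (chi : K -> algC) (E : {set 'rV[K]_d}) (r : K) : algC :=
  \sum_(m | normv m == r) `|fhat chi (ind E) m| ^+ 2.

Definition Mfrak (chi : K -> algC) (E : {set 'rV[K]_d}) : algC :=
  \big[Order.max/0]_(r : K) sphere_mass chi E r.
Definition Mfrak_star (chi : K -> algC) (E : {set 'rV[K]_d}) : algC :=
  \big[Order.max/0]_(r : K | r != 0) sphere_mass chi E r.
End Defs.

(* Main.v *)
Require Import Defs.
From HB Require Import structures.
From mathcomp Require Import all_boot all_order all_algebra all_field.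
Import Order.TTheory GRing.Theory Num.Theory.
Local Open Scope ring_scope.
From mathcomp Require Import ring.
Set Implicit Arguments. Unset Strict Implicit. Unset Printing Implicit Defensive.

Lemma conjCM (x y : algC) : (x * y)^* = x^* * y^*.
Proof. exact: rmorphM. Qed.
Lemma conjCV (x : algC) : (x^-1)^* = (x^*)^-1.
Proof. exact: fmorphV. Qed.
Lemma conjC_sum (I : finType) (P : pred I) (F : I -> algC) :
  (\sum_(i | P i) F i)^* = \sum_(i | P i) (F i)^*.
Proof. exact: rmorph_sum. Qed.
Lemma conjC_natX n k : ((n%:R ^+ k : algC))^* = n%:R ^+ k.
Proof. by rewrite rmorphXn rmorph_nat. Qed.

Lemma conjCB (x y : algC) : (x - y)^* = x^* - y^*.
Proof. exact: rmorphB. Qed.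

Lemma sum_prod (I J : finType) (F : I -> algC) (G : J -> algC) :
  (\sum_i F i) * (\sum_j G j) = \sum_i \sum_j F i * G j.
Proof. by rewrite mulr_suml; apply: eq_bigr => i _; rewrite mulr_sumr. Qed.

Lemma cs0 (I : finType) (a b : I -> algC) :
  `|\sum_i a i * (b i)^*| ^+ 2 <= (\sum_i `|a i| ^+ 2) * (\sum_i `|b i| ^+ 2).
Proof.
set T := \sum_i a i * (b i)^*.
set P := \sum_i `|a i| ^+ 2.
set Q := \sum_i `|b i| ^+ 2.
have id : \sum_i \sum_j `|a i * b j - a j * b i| ^+ 2
   = P * Q + Q * P - T * T^* - T^* * T.
  rewrite /T /P /Q conjC_sum !sum_prod.
  rewrite -big_split -sumrB -sumrB /=; apply: eq_bigr => i _.
  rewrite -big_split -sumrB -sumrB /=; apply: eq_bigr => j _.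
  rewrite !normCK !conjCM conjCB !conjCM !conjCK; ring.
have : 0 <= P * Q + Q * P - T * T^* - T^* * T.
  by rewrite -id; apply: sumr_ge0 => i _; apply: sumr_ge0 => j _; by rewrite exprn_ge0.
have -> : P * Q + Q * P - T * T^* - T^* * T = 2 * (P * Q - T * T^*) by ring.
by rewrite pmulr_rge0 // subr_ge0 normCK.
Qed.

Lemma cs (I : finType) (P : pred I) (a b : I -> algC) :
  `|\sum_(i | P i) a i * (b i)^*| ^+ 2
   <= (\sum_(i | P i) `|a i| ^+ 2) * (\sum_(i | P i) `|b i| ^+ 2).
Proof.
have := cs0 (fun i => if P i then a i else 0) (fun i => if P i then b i else 0).
rewrite !(big_mkcond P) /=.
have e1 : forall i, (if P i then a i * (b i)^* else 0)
   = (if P i then a i else 0) * (if P i then b i else 0)^*.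
  by move=> i; case: (P i); rewrite ?mul0r.
have e2 : forall (c : I -> algC) i, (if P i then `|c i| ^+ 2 else 0)
   = `|if P i then c i else 0| ^+ 2.
  by move=> c i; case: (P i); rewrite ?normr0 ?expr0n.
by rewrite (eq_bigr _ (fun i _ => e1 i)) (eq_bigr _ (fun i _ => e2 a i))
   (eq_bigr _ (fun i _ => e2 b i)).
Qed.

Lemma le_max_l (x y : algC) : x <= Order.max x y.
Proof. by rewrite /Order.max; case: ifP => // /ltW. Qed.
Lemma le_max_r (x y : algC) : 0 <= x -> 0 <= y -> y <= Order.max x y.
Proof.
move=> hx hy; rewrite /Order.max; case: ifP => // /negbT.
rewrite real_ltNge ?ger0_real // negbK //.
Qed.
Lemma max_ge0 (x y : algC) : 0 <= x -> 0 <= y -> 0 <= Order.max x y.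
Proof. by move=> hx hy; rewrite /Order.max; case: ifP. Qed.

Lemma bigmax_ge0 (I : Type) (r : seq I) (P : pred I) (h : I -> algC) :
  (forall i, 0 <= h i) -> 0 <= \big[Order.max/0]_(i <- r | P i) h i.
Proof. by move=> h0; elim/big_ind: _ => // x y; apply: max_ge0. Qed.

Lemma le_bigmax_seq (I : eqType) (r : seq I) (P : pred I) (h : I -> algC) :
  (forall i, 0 <= h i) -> forall j, j \in r -> P j ->
  h j <= \big[Order.max/0]_(i <- r | P i) h i.
Proof.
move=> h0; elim: r => // x r IH j; rewrite inE big_cons => /orP [/eqP ->|jr] Pj.
  by rewrite Pj; apply: le_max_l.
case: (P x); last exact: IH.
apply: le_trans (IH j jr Pj) _; apply: le_max_r => //; exact: bigmax_ge0.
Qed.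

Lemma le_bigmax (I : finType) (P : pred I) (h : I -> algC) :
  (forall i, 0 <= h i) -> forall i, P i -> h i <= \big[Order.max/0]_(i | P i) h i.
Proof. by move=> h0 i Pi; apply: le_bigmax_seq => //; rewrite mem_index_enum. Qed.

Lemma eqleW (x y : algC) : x = y -> x <= y.
Proof. by move=> ->. Qed.

Section Chi.
Variable K : finFieldType.
Variable chi : K -> algC.
Hypothesis hchi : is_add_char chi.
Hypothesis hnt : nontrivial_char chi.

Lemma chiD x y : chi (x + y) = chi x * chi y.
Proof. by case: hchi. Qed.

Lemma chi_neq0 x : chi x != 0.
Proof. by case: hchi => _ h; rewrite -normr_eq0 h oner_eq0. Qed.

Lemma chi0 : chi 0 = 1.
Proof.
have h := chiD 0 0; rewrite addr0 in h.
by apply: (mulfI (chi_neq0 0)); rewrite -h mulr1.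
Qed.

Lemma chiN x : chi (- x) = (chi x)^*.
Proof.
apply: (mulfI (chi_neq0 x)); rewrite -chiD subrr chi0 -normCK.
by case: hchi => _ ->; rewrite expr1n.
Qed.

Lemma chiNc x : (chi x)^* = chi (- x).
Proof. by rewrite chiN. Qed.

Lemma sum_chi : \sum_a chi a = 0.
Proof.
case: hnt => x0 hx0.
have e : \sum_a chi a = chi x0 * \sum_a chi a.
  rewrite {1}(reindex_inj (addrI x0)) /= mulr_sumr.
  by apply: eq_bigr => a _; rewrite chiD.
have : (1 - chi x0) * \sum_a chi a = 0 by rewrite mulrBl -e mul1r subrr.
move/eqP; rewrite mulf_eq0 => /orP [|/eqP //].
by rewrite subr_eq0 eq_sym (negbTE hx0).
Qed.

Lemma sum_chi_mul c : \sum_a chi (c * a) = if c == 0 then (q K)%:R else 0.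
Proof.
case: eqP => [->|/eqP cn0].
  under eq_bigr do rewrite mul0r chi0.
  by rewrite sumr_const.
transitivity (\sum_a chi a); last exact: sum_chi.
by rewrite [RHS](reindex_inj (mulfI cn0)).
Qed.

Lemma chi_conj_mul x y : chi x * (chi y)^* = chi (x - y).
Proof. by rewrite chiNc -chiD. Qed.

Lemma parseval1 (a : K -> algC) :
  \sum_t `|\sum_s chi (s * t) * a s| ^+ 2 = (q K)%:R * \sum_s `|a s| ^+ 2.
Proof.
transitivity (\sum_t \sum_s \sum_s' (chi (s * t) * (chi (s' * t))^*) * (a s * (a s')^*)).
  apply: eq_bigr => t _; rewrite normCK rmorph_sum mulr_suml.
  apply: eq_bigr => s _; rewrite mulr_sumr; apply: eq_bigr => s' _.
  rewrite rmorphM; ring.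
rewrite exchange_big mulr_sumr; apply: eq_bigr => s _.
rewrite exchange_big /= (bigD1 s) //= [X in _ + X]big1 => [|s' ns'].
  rewrite -mulr_suml addr0 normCK; congr (_ * _).
  under eq_bigr do rewrite chi_conj_mul -mulrBl.
  by rewrite sum_chi_mul subrr eqxx.
rewrite -mulr_suml; under eq_bigr do rewrite chi_conj_mul -mulrBl.
by rewrite sum_chi_mul subr_eq0 eq_sym (negbTE ns') mul0r.
Qed.

Variable d : nat.
Notation V := 'rV[K]_d.

Lemma dotvDl (m1 m2 x : V) : dotv (m1 + m2) x = dotv m1 x + dotv m2 x.
Proof. by rewrite /dotv -big_split; apply: eq_bigr => i _; rewrite mxE mulrDl. Qed.
Lemma dotvC (m x : V) : dotv m x = dotv x m.
Proof. by rewrite /dotv; apply: eq_bigr => i _; rewrite mulrC. Qed.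
Lemma dotvDr (m x1 x2 : V) : dotv m (x1 + x2) = dotv m x1 + dotv m x2.
Proof. by rewrite dotvC dotvDl !(dotvC m). Qed.
Lemma dotvZl c (m x : V) : dotv (c *: m) x = c * dotv m x.
Proof. by rewrite /dotv mulr_sumr; apply: eq_bigr => i _; rewrite mxE mulrA. Qed.
Lemma dotvZr c (m x : V) : dotv m (c *: x) = c * dotv m x.
Proof. by rewrite dotvC dotvZl dotvC. Qed.
Lemma dotvNr (m x : V) : dotv m (- x) = - dotv m x.
Proof. by rewrite -scaleN1r dotvZr mulN1r. Qed.
Lemma dotvBr (m x y : V) : dotv m (x - y) = dotv m x - dotv m y.
Proof. by rewrite dotvDr dotvNr. Qed.
Lemma dotv0r (m : V) : dotv m 0 = 0.
Proof. by rewrite /dotv big1 // => i _; rewrite mxE mulr0. Qed.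

Lemma normvD (a b : V) : normv (a + b) = normv a + 2 * dotv a b + normv b.
Proof.
rewrite /normv /dotv mulr_sumr -!big_split /=; apply: eq_bigr => i _.
rewrite mxE; ring.
Qed.
Lemma normvZ c (a : V) : normv (c *: a) = c ^+ 2 * normv a.
Proof. by rewrite /normv mulr_sumr; apply: eq_bigr => i _; rewrite mxE exprMn. Qed.
Lemma normvN (a : V) : normv (- a) = normv a.
Proof. by rewrite -scaleN1r normvZ sqrrN expr1n mul1r. Qed.
Lemma normv0 : normv (0 : V) = 0.
Proof. by rewrite -(scale0r 0) normvZ expr0n mul0r. Qed.

Lemma sum_chi_dot (v : V) :
  \sum_(m : V) chi (dotv m v) = if v == 0 then (q K)%:R ^+ d else 0.
Proof.
case: eqP => [->|/eqP vn0].
  under eq_bigr do rewrite dotv0r chi0.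
  by rewrite sumr_const card_mx mul1n -natrX.
have [i hi] : exists i, v 0 i != 0.
  apply/existsP; apply: contraR vn0 => /existsPn H.
  by apply/eqP/rowP => i; rewrite mxE; apply/eqP/negPn/H.
case: hnt => x0 hx0.
pose w : V := (x0 / v 0 i) *: delta_mx 0 i.
have hw : dotv w v = x0.
  rewrite /dotv (bigD1 i) //= big1 => [|j /negbTE ji].
    by rewrite !mxE !eqxx mulr1 addr0 divfK.
  by rewrite !mxE ji andbF mulr0 mul0r.
have e : \sum_(m : V) chi (dotv m v) = chi x0 * \sum_(m : V) chi (dotv m v).
  rewrite {1}(reindex_inj (addrI w)) /= mulr_sumr.
  by apply: eq_bigr => a _; rewrite dotvDl chiD hw.
have : (1 - chi x0) * \sum_(m : V) chi (dotv m v) = 0 by rewrite mulrBl -e mul1r subrr.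
move/eqP; rewrite mulf_eq0 => /orP [|/eqP //].
by rewrite subr_eq0 eq_sym (negbTE hx0).
Qed.

Notation Qr := ((q K)%:R ^+ d : algC).

Lemma q_gt0 : (0 < q K)%N.
Proof. by rewrite /q; apply/card_gt0P; exists 0. Qed.
Lemma Qr_neq0 : Qr != 0.
Proof. by rewrite expf_neq0 // pnatr_eq0 -lt0n q_gt0. Qed.
Lemma Qr_gt0 : 0 < Qr.
Proof. by rewrite exprn_gt0 // ltr0n q_gt0. Qed.
Lemma Qr_conj : Qr^* = Qr.
Proof. by rewrite rmorphXn rmorph_nat. Qed.

Lemma plancherel (f : V -> algC) :
  \sum_m `|fhat chi f m| ^+ 2 = Qr^-1 * \sum_x `|f x| ^+ 2.
Proof.
transitivity (\sum_m (Qr^-1 * Qr^-1) *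
   \sum_x \sum_y chi (dotv m (y - x)) * (f x * (f y)^*)).
  apply: eq_bigr => m _; rewrite /fhat normCK conjCM conjC_sum conjCV conjC_natX.
  rewrite mulrACA mulr_suml; congr (_ * _); apply: eq_bigr => x _.
  rewrite mulr_sumr; apply: eq_bigr => y _.
  rewrite conjCM chiNc opprK dotvBr chiD; ring.
rewrite -mulr_sumr exchange_big /=.
under eq_bigr do rewrite exchange_big /=.
rewrite mulr_sumr mulr_sumr; apply: eq_bigr => x _.
rewrite (bigD1 x) //= [X in _ + X]big1 => [|y nyx].
  rewrite -mulr_suml sum_chi_dot subrr eqxx addr0 normCK.
  by field; rewrite Qr_neq0.
by rewrite -mulr_suml sum_chi_dot subr_eq0 (negbTE nyx) mul0r.
Qed.

Hypothesis h2 : (2 : K) != 0.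
Lemma h4 : (4 : K) != 0.
Proof. have -> : (4 : K) = 2 * 2 by ring. by rewrite mulf_neq0. Qed.
Definition g u := \sum_(m : V) chi (u * normv m).

Lemma gauss_shift u (v : V) : u != 0 ->
  \sum_(m : V) chi (u * normv m + dotv m v) = chi (- ((4 * u)^-1 * normv v)) * g u.
Proof.
move=> un0; set a : V := (2 * u)^-1 *: v.
have key : forall m, u * normv m + dotv m v
    = u * normv (m + a) + - ((4 * u)^-1 * normv v).
  move=> m; rewrite normvD normvZ dotvZr /a.
  by field; rewrite un0 h4 h2.
under eq_bigr do rewrite key chiD.
rewrite -mulr_suml mulrC; congr (_ * _).
by rewrite /g [RHS](reindex_inj (addIr a)).
Qed.

Lemma g_norm u : u != 0 -> g u * (g u)^* = Qr.
Proof.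
move=> un0; rewrite /g conjC_sum sum_prod exchange_big /=.
have key : forall m' w : V, u * normv (w + m') - u * normv m'
    = u * normv w + dotv m' ((2 * u) *: w).
  by move=> m' w; rewrite normvD dotvZr (dotvC m'); ring.
transitivity (\sum_(m' : V) \sum_(w : V) chi (u * normv w) * chi (dotv m' ((2 * u) *: w))).
  apply: eq_bigr => m' _.
  rewrite (reindex_inj (addIr m')) /=; apply: eq_bigr => w _.
  by rewrite chi_conj_mul key chiD.
rewrite exchange_big /= (bigD1 0) //= [X in _ + X]big1 => [|w wn0].
  by rewrite -mulr_sumr sum_chi_dot scaler0 eqxx normv0 mulr0 chi0 mul1r addr0.
by rewrite -mulr_sumr sum_chi_dot scaler_eq0 mulf_eq0 (negbTE h2) (negbTE un0) (negbTE wn0) mulr0.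
Qed.
Lemma sum_chi_mulr c : \sum_a chi (a * c) = if c == 0 then (q K)%:R else 0.
Proof. by under eq_bigr do rewrite mulrC; rewrite sum_chi_mul. Qed.

Lemma q_neq0 : (q K)%:R != 0 :> algC.
Proof. by rewrite pnatr_eq0 -lt0n q_gt0. Qed.

Variables E F : {set V}.
Notation e := (ind E).
Notation f := (ind F).
Definition A s := \sum_x \sum_y e x * f y * chi (- (s * normv (x - y))).

Lemma nu_eq t : (nu E F t)%:R = (q K)%:R^-1 * \sum_s chi (s * t) * A s.
Proof.
have -> : (nu E F t)%:R = \sum_x \sum_y e x * f y * (normv (x - y) == t)%:R.
  rewrite /nu -sum1_card natr_sum big_mkcond /= [RHS]pair_big /=.
  apply: eq_bigr => [[x y]] _ /=; rewrite inE /= /ind.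
  by case: (x \in E); case: (y \in F); case: (normv (x-y) == t);
    rewrite ?mulr0 ?mul0r ?mulr1.
transitivity (\sum_x \sum_y \sum_s (q K)%:R^-1 *
     (chi (s * t) * (e x * f y * chi (- (s * normv (x - y)))))).
  apply: eq_bigr => x _; apply: eq_bigr => y _.
  rewrite -mulr_sumr.
  have -> : \sum_s chi (s * t) * (e x * f y * chi (- (s * normv (x - y))))
     = e x * f y * \sum_s chi (s * (t - normv (x - y))).
    by rewrite mulr_sumr; apply: eq_bigr => s _; rewrite mulrBr chiD; ring.
  rewrite sum_chi_mulr subr_eq0 eq_sym.
  case: eqP => _; last by rewrite !mulr0.
  by rewrite /= mulr1 [RHS]mulrC mulfK ?q_neq0.
under eq_bigr do rewrite exchange_big /=.
rewrite exchange_big /= mulr_sumr; apply: eq_bigr => s _.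
rewrite /A mulr_sumr mulr_sumr; apply: eq_bigr => x _.
by rewrite mulr_sumr mulr_sumr; apply: eq_bigr => y _.
Qed.
Lemma ind_conj (G : {set V}) x : (ind G x)^* = ind G x.
Proof. exact: conjC_nat. Qed.

Lemma sumnu2 : \sum_t ((nu E F t) ^ 2)%:R = (q K)%:R^-1 * \sum_s `|A s| ^+ 2.
Proof.
transitivity (\sum_t (q K)%:R^-1 ^+ 2 * `|\sum_s chi (s * t) * A s| ^+ 2).
  apply: eq_bigr => t _.
  rewrite natrX -(normr_nat algC (nu E F t)) nu_eq normrM exprMn normfV normr_nat.
  by [].
rewrite -mulr_sumr parseval1 mulrA; congr (_ * _).
by rewrite expr2 -mulrA mulVf ?q_neq0 // mulr1.
Qed.

Definition B u := \sum_(m : V) chi (u * normv m) * (fhat chi e m * (fhat chi f m)^*).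

Lemma fhat_prod m : fhat chi e m * (fhat chi f m)^*
   = Qr^-1 * Qr^-1 * \sum_x \sum_y e x * f y * chi (dotv m (y - x)).
Proof.
rewrite /fhat conjCM conjC_sum conjCV conjC_natX mulrACA sum_prod.
congr (_ * _); apply: eq_bigr => x _; apply: eq_bigr => y _.
rewrite conjCM chiNc opprK ind_conj dotvBr chiD; ring.
Qed.

Lemma B_eq u : u != 0 -> B u = Qr^-1 * Qr^-1 * g u * A ((4 * u)^-1).
Proof.
move=> un0; rewrite /B.
under eq_bigr do rewrite fhat_prod.
transitivity (Qr^-1 * Qr^-1 * \sum_(m : V) \sum_x \sum_y
     e x * f y * chi (u * normv m + dotv m (y - x))).
  rewrite mulr_sumr; apply: eq_bigr => m _; rewrite mulrCA; congr (_ * _).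
  rewrite mulr_sumr; apply: eq_bigr => x _; rewrite mulr_sumr; apply: eq_bigr => y _.
  rewrite chiD; ring.
rewrite exchange_big /=; under eq_bigr do rewrite exchange_big /=.
rewrite -!mulrA; do 2 congr (_ * _).
rewrite /A mulr_sumr; apply: eq_bigr => x _; rewrite mulr_sumr; apply: eq_bigr => y _.
rewrite -mulr_sumr gauss_shift // -(normvN (x - y)) opprB; ring.
Qed.
Lemma A_bound u :
  `|A ((4 * u)^-1)| ^+ 2 <= (u == 0)%:R * `|A 0| ^+ 2 + Qr ^+ 3 * `|B u| ^+ 2.
Proof.
have [->|un0] := eqVneq u 0.
  by rewrite mulr0 invr0 mul1r lerDl mulr_ge0 ?exprn_ge0 // ltW ?Qr_gt0.
rewrite mul0r add0r B_eq // !normrM !exprMn (normCK (g u)) g_norm // normfV.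
rewrite (ger0_norm (ltW Qr_gt0)).
apply: eqleW; field; exact: Qr_neq0.
Qed.

Lemma sumA : \sum_s `|A s| ^+ 2 <= `|A 0| ^+ 2 + Qr ^+ 3 * \sum_u `|B u| ^+ 2.
Proof.
have inj : injective (fun u : K => (4 * u)^-1).
  by move=> x y /invr_inj /(mulfI h4).
rewrite (reindex_inj inj) /=.
apply: le_trans (ler_sum _ (fun u _ => A_bound u)) _.
rewrite big_split /= -mulr_suml -mulr_sumr.
have -> : \sum_(u : K) (u == 0)%:R = 1 :> algC.
  rewrite (bigD1 0) //= [X in _ + X]big1 => [|u /negbTE -> //].
  by rewrite eqxx addr0.
by rewrite mul1r.
Qed.

Lemma sum_ind (G : {set V}) : \sum_x ind G x = #|G|%:R.
Proof.
rewrite -sum1_card natr_sum [RHS]big_mkcond /=; apply: eq_bigr => x _.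
by rewrite /ind; case: (x \in G).
Qed.

Lemma A0 : A 0 = #|E|%:R * #|F|%:R.
Proof.
rewrite -!sum_ind sum_prod /A; apply: eq_bigr => x _; apply: eq_bigr => y _.
by rewrite mul0r oppr0 chi0 mulr1.
Qed.

Definition Psi r := \sum_(m | normv m == r) fhat chi e m * (fhat chi f m)^*.

Lemma sumB : \sum_u `|B u| ^+ 2 = (q K)%:R * \sum_r `|Psi r| ^+ 2.
Proof.
rewrite -parseval1; apply: eq_bigr => u _; congr (`|_| ^+ 2).
rewrite /B (partition_big (@normv K d) predT) //; apply: eq_bigr => r _.
rewrite /Psi mulr_sumr; apply: eq_bigr => m /andP [_ /eqP ->].
by rewrite (mulrC u).
Qed.

Lemma Psi_bound r : `|Psi r| ^+ 2
  <= sphere_mass chi E r * \sum_(m | normv m == r) `|fhat chi f m| ^+ 2.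
Proof. exact: cs. Qed.

Lemma sumF : \sum_r \sum_(m | normv m == r) `|fhat chi f m| ^+ 2 = Qr^-1 * #|F|%:R.
Proof.
have -> : \sum_r \sum_(m | normv m == r) `|fhat chi f m| ^+ 2
   = \sum_m `|fhat chi f m| ^+ 2.
  by rewrite [RHS](partition_big (@normv K d) predT) //.
rewrite plancherel -sum_ind; congr (_ * _).
by apply: eq_bigr => x _; rewrite /ind; case: (x \in F); rewrite ?normr1 ?normr0 ?expr1n ?expr0n.
Qed.

Lemma sphere_ge0 r : 0 <= sphere_mass chi E r.
Proof. by apply: sumr_ge0 => m _; rewrite exprn_ge0. Qed.

Lemma sumF_ge0 r : 0 <= \sum_(m | normv m == r) `|fhat chi f m| ^+ 2.
Proof. by apply: sumr_ge0 => m _; rewrite exprn_ge0. Qed.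

Lemma main_ineq : \sum_t ((nu E F t) ^ 2)%:R <=
   (q K)%:R^-1 * (#|E|%:R ^+ 2) * (#|F|%:R ^+ 2) + Qr ^+ 3 * \sum_r `|Psi r| ^+ 2.
Proof.
rewrite sumnu2; apply: le_trans (ler_wpM2l _ sumA) _.
  by rewrite invr_ge0 ler0n.
rewrite A0 sumB normrM !normr_nat exprMn mulrDr mulrA; apply: eqleW; congr (_ + _).
by field; exact: q_neq0.
Qed.

Lemma bound1 : \sum_r `|Psi r| ^+ 2 <= Mfrak chi E * (Qr^-1 * #|F|%:R).
Proof.
rewrite -sumF mulr_sumr; apply: ler_sum => r _.
apply: le_trans (Psi_bound r) _; apply: ler_wpM2r; first exact: sumF_ge0.
exact: (le_bigmax (P := predT) sphere_ge0).
Qed.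

Lemma bound2 : \sum_r `|Psi r| ^+ 2
   <= `|Psi 0| ^+ 2 + Mfrak_star chi E * (Qr^-1 * #|F|%:R).
Proof.
rewrite (bigD1 0) //= lerD2l -sumF mulr_sumr.
apply: le_trans (_ : _ <= \sum_(r | r != 0) Mfrak_star chi E *
   \sum_(m | normv m == r) `|fhat chi f m| ^+ 2) _.
  apply: ler_sum => r rn0.
  apply: le_trans (Psi_bound r) _; apply: ler_wpM2r; first exact: sumF_ge0.
  exact: (le_bigmax (P := fun r => r != 0) sphere_ge0).
rewrite [X in _ <= X](bigD1 0) //= lerDr mulr_ge0 ?sumF_ge0 //.
exact: (bigmax_ge0 _ _ sphere_ge0).
Qed.
End Chi.

Unset Implicit Arguments.
Theorem mainTheorem7 (K : finFieldType) (hchar : 2 \notin [pchar K])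
  (chi : K -> algC) (hchi : is_add_char chi) (hnt : nontrivial_char chi)
  (d : nat) (hd : (2 <= d)%N) (E F : {set 'rV[K]_d}) :
  let qq : algC := (q K)%:R in
  let S := \sum_(t : K) ((nu E F t) ^ 2)%:R : algC in
  S <= qq^-1 * (#|E|%:R ^+ 2) * (#|F|%:R ^+ 2)
       + qq ^+ (2 * d) * #|F|%:R * Mfrak chi E
  /\
  S <= qq^-1 * (#|E|%:R ^+ 2) * (#|F|%:R ^+ 2)
       + qq ^+ (3 * d) *
         `| \sum_(m | normv m == 0) (fhat chi (ind E) m)^* * fhat chi (ind F) m | ^+ 2
       + qq ^+ (2 * d) * #|F|%:R * Mfrak_star chi E.
Proof.
move=> qq S.
have h2 : (2 : K) != 0.
  by apply: contra hchar => h; rewrite inE /= h.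
have Hm := main_ineq hchi hnt h2 E F.
have B1 := bound1 hchi hnt E F.
have B2 := bound2 hchi hnt E F.
have Qn0 : ((q K)%:R ^+ d : algC) != 0 by exact: Qr_neq0.
have Qg0 : 0 <= ((q K)%:R ^+ d : algC) ^+ 3 by rewrite exprn_ge0 // exprn_ge0 // ler0n.
have eQ2 : qq ^+ (2 * d) = ((q K)%:R ^+ d) ^+ 2 by rewrite mulnC exprM.
have eQ3 : qq ^+ (3 * d) = ((q K)%:R ^+ d) ^+ 3 by rewrite mulnC exprM.
have eP : `| \sum_(m | normv m == 0) (fhat chi (ind E) m)^* * fhat chi (ind F) m | ^+ 2
    = `|Psi chi E F 0| ^+ 2.
  rewrite /Psi -norm_conjC conjC_sum; congr (`|_| ^+ 2); apply: eq_bigr => m _.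
  by rewrite conjCM conjCK mulrC.
split.
  apply: le_trans Hm _; rewrite lerD2l eQ2.
  apply: le_trans (ler_wpM2l Qg0 B1) _.
  by apply: eqleW; field.
apply: le_trans Hm _; rewrite -addrA lerD2l eQ2 eQ3 eP.
apply: le_trans (ler_wpM2l Qg0 B2) _.
by apply: eqleW; field.
Qed.
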